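(* Let $S$ be a semigroup with apartness satisfying assumption (CD$_S$), and let $e\in S$ be an idempotent. Then $e\tilde{\mathcal H}=\{x\in S\mid e\,\tilde{\mathcal H}\,x\}$ is a co-subsemigroup of $S$, i.e. it is a strongly extensional subset and $xy\in e\tilde{\mathcal H}\Rightarrow(x\in e\tilde{\mathcal H}\vee y\in e\tilde{\mathcal H})$ for all $x,y\in S$.
   Context: Constructive (intuitionistic) mathematics. A semigroup with apartness is a semigroup with an apartness relation $\#$ (irreflexive, symmetric, cotransitive: $x\#z\Rightarrow(x\#y\vee y\#z)$) such that $xy\#zw\Rightarrow(x\#z\vee y\#w)$. $S^1=S\sqcup\{1\}$, $1$ an identity, $1\#s$ for all $s\in S$. $a\succ_l b\Leftrightarrow\forall_{s\in S^1}(a\#sb)$; $a\succ_r b\Leftrightarrow\forall_{s\in S^1}(a\#bs)$; $\tilde{\mathcal L}=(\succ_l)\cup(\succ_l)^{-1}$, $\tilde{\mathcal R}=(\succ_r)\cup(\succ_r)^{-1}$, $\tilde{\mathcal H}=\tilde{\mathcal L}\cup\tilde{\mathcal R}$. A subset $A$ is strongly extensional if $a\in A\Rightarrow(x\in A\vee x\#a)$. Assumption (CD$_S$): for every predicate $P(x)$ of the form $u(x)\#v$ or $\forall_s(u(s,x)\#v)$ ($u,v$ terms built by multiplication from variables and elements of $S^1$, $x$ not occurring in $v$), and every $Q$ of the form $u\#v$, $\forall_s(u(s)\#v)$ or $\forall_{s,t}(u(s,t)\#v)$ ($x$ not occurring in $u,v$; $s,t$ not in $v$), the implication $\forall_x(P(x)\vee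 Q)\Rightarrow(\forall_xP(x))\vee Q$ holds. *)

(* Defs.v *)
From Stdlib Require Import List.
Import ListNotations.

Record SemigroupAp := {
  car :> Type;
  smul : car -> car -> car;
  sap : car -> car -> Prop;
  smul_assoc : forall x y z, smul x (smul y z) = smul (smul x y) z;
  sap_irrefl : forall x, ~ sap x x;
  sap_sym : forall x y, sap x y -> sap y x;
  sap_cotrans : forall x y z, sap x z -> sap x y \/ sap y z;
  sap_mul_se : forall x y z w, sap (smul x y) (smul z w) -> sap x z \/ sap y w
}.

Section S1.
Variable S : SemigroupAp.

(** S^1 = S + {1}; [None] is the adjoined identity 1. *)
Definition S1 := option (car S).

Definition mul1 (a b : S1) : S1 :=
  match a, b with
  | None, _ => b
  | _, None => a
  | Some x, Some y => Some (smul S x y)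
  end.

Definition ap1 (a b : S1) : Prop :=
  match a, b with
  | None, None => False
  | None, Some _ => True
  | Some _, None => True
  | Some x, Some y => sap S x y
  end.

Definition succ_l (a b : car S) : Prop :=
  forall s : S1, ap1 (Some a) (mul1 s (Some b)).
Definition succ_r (a b : car S) : Prop :=
  forall s : S1, ap1 (Some a) (mul1 (Some b) s).

Definition Ltilde (a b : car S) : Prop := succ_l a b \/ succ_l b a.
Definition Rtilde (a b : car S) : Prop := succ_r a b \/ succ_r b a.
Definition Htilde (a b : car S) : Prop := Ltilde a b \/ Rtilde a b.

Definition Hclass (e : car S) : car S -> Prop := fun x => Htilde e x.

Definition strongly_extensional (A : car S -> Prop) : Prop :=
  forall a x, A a -> A x \/ sap S x a.

Definition co_subsemigroup (A : car S -> Prop) : Prop :=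
  strongly_extensional A /\
  (forall x y, A (smul S x y) -> A x \/ A y).

(** Terms built by multiplication from variables and elements of S^1.
    Variable 0 is x, variable 1 is s, variable 2 is t. *)
Inductive term :=
| TVar : nat -> term
| TConst : S1 -> term
| TMul : term -> term -> term.

Fixpoint eval (env : nat -> S1) (u : term) : S1 :=
  match u with
  | TVar i => env i
  | TConst a => a
  | TMul u1 u2 => mul1 (eval env u1) (eval env u2)
  end.

Fixpoint vars_in (l : list nat) (u : term) : Prop :=
  match u with
  | TVar i => In i l
  | TConst _ => True
  | TMul u1 u2 => vars_in l u1 /\ vars_in l u2
  end.

Definition env3 (x s t : S1) : nat -> S1 :=
  fun i => match i with 0 => x | 1 => s | _ => t end.

Inductive Pform : (car S -> Prop) -> Prop :=
| Pf1 : forall u v, vars_in [0] u -> vars_in [] v ->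
    Pform (fun x => ap1 (eval (env3 (Some x) None None) u)
                        (eval (env3 (Some x) None None) v))
| Pf2 : forall u v, vars_in [0; 1] u -> vars_in [1] v ->
    Pform (fun x => forall s : S1,
             ap1 (eval (env3 (Some x) s None) u) (eval (env3 (Some x) s None) v)).

Inductive Qform : Prop -> Prop :=
| Qf1 : forall u v, vars_in [] u -> vars_in [] v ->
    Qform (ap1 (eval (env3 None None None) u) (eval (env3 None None None) v))
| Qf2 : forall u v, vars_in [1] u -> vars_in [] v ->
    Qform (forall s : S1,
             ap1 (eval (env3 None s None) u) (eval (env3 None s None) v))
| Qf3 : forall u v, vars_in [1; 2] u -> vars_in [] v ->
    Qform (forall s t : S1,
             ap1 (eval (env3 None s t) u) (eval (env3 None s t) v)).

Definition CD_S : Prop :=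
  forall (P : car S -> Prop) (Q : Prop), Pform P -> Qform Q ->
    (forall x, P x \/ Q) -> (forall x, P x) \/ Q.

End S1.

(* Main.v *)
Require Import Defs.
From Stdlib Require Import List.
Import ListNotations.

Lemma ap1_irr (S : SemigroupAp) (a : S1 S) : ~ ap1 S a a.
Proof. destruct a; simpl; auto. apply sap_irrefl. Qed.

Lemma ap1_sym (S : SemigroupAp) (a b : S1 S) : ap1 S a b -> ap1 S b a.
Proof. destruct a, b; simpl; auto. apply sap_sym. Qed.

Lemma ap1_cot (S : SemigroupAp) (a b c : S1 S) : ap1 S a c -> ap1 S a b \/ ap1 S b c.
Proof. destruct a, b, c; simpl; auto; try tauto. apply sap_cotrans. Qed.

Lemma mul1_assoc (S : SemigroupAp) (a b c : S1 S) :
  mul1 S a (mul1 S b c) = mul1 S (mul1 S a b) c.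
Proof. destruct a, b, c; simpl; auto. rewrite smul_assoc; auto. Qed.

Lemma ap1_se (S : SemigroupAp) (a b c d : S1 S) :
  ap1 S (mul1 S a b) (mul1 S c d) -> ap1 S a c \/ ap1 S b d.
Proof.
  destruct a, b, c, d; simpl; auto; try tauto.
  apply sap_mul_se.
Qed.

Lemma se_l (S : SemigroupAp) (a b c : S1 S) :
  ap1 S (mul1 S c a) (mul1 S c b) -> ap1 S a b.
Proof. intro H; destruct (ap1_se S _ _ _ _ H) as [h|h]; auto. now apply ap1_irr in h. Qed.

Lemma se_r (S : SemigroupAp) (a b c : S1 S) :
  ap1 S (mul1 S a c) (mul1 S b c) -> ap1 S a b.
Proof. intro H; destruct (ap1_se S _ _ _ _ H) as [h|h]; auto. now apply ap1_irr in h. Qed.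

Lemma cd_l (S : SemigroupAp) (HCD : CD_S S) (k m : car S) (Q : Prop) :
  Qform S Q ->
  (forall s : S1 S, ap1 S (mul1 S s (Some k)) (Some m) \/ Q) ->
  (forall s : S1 S, ap1 S (mul1 S s (Some k)) (Some m)) \/ Q.
Proof.
  intros HQ H.
  destruct (HCD (fun x => ap1 S (mul1 S (Some x) (Some k)) (Some m)) Q) as [A|A].
  - exact (Pf1 S (TMul S (TVar S 0) (TConst S (Some k))) (TConst S (Some m))
             (conj (or_introl eq_refl) I) I).
  - exact HQ.
  - intro x; exact (H (Some x)).
  - destruct (H None) as [B|B]; [left; intros [s|]; auto | right; auto].
  - right; auto.
Qed.

Lemma cd_r (S : SemigroupAp) (HCD : CD_S S) (k m : car S) (Q : Prop) :
  Qform S Q ->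
  (forall s : S1 S, ap1 S (mul1 S (Some k) s) (Some m) \/ Q) ->
  (forall s : S1 S, ap1 S (mul1 S (Some k) s) (Some m)) \/ Q.
Proof.
  intros HQ H.
  destruct (HCD (fun x => ap1 S (mul1 S (Some k) (Some x)) (Some m)) Q) as [A|A].
  - exact (Pf1 S (TMul S (TConst S (Some k)) (TVar S 0)) (TConst S (Some m))
             (conj I (or_introl eq_refl)) I).
  - exact HQ.
  - intro x; exact (H (Some x)).
  - destruct (H None) as [B|B]; [left; intros [s|]; auto | right; auto].
  - right; auto.
Qed.

Lemma q1 (S : SemigroupAp) (a b : S1 S) : Qform S (ap1 S a b).
Proof. exact (Qf1 S (TConst S a) (TConst S b) I I). Qed.

Lemma q2l (S : SemigroupAp) (k m : car S) :
  Qform S (forall s : S1 S, ap1 S (mul1 S s (Some k)) (Some m)).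
Proof. exact (Qf2 S (TMul S (TVar S 1) (TConst S (Some k))) (TConst S (Some m))
             (conj (or_introl eq_refl) I) I). Qed.

Lemma q2r (S : SemigroupAp) (k m : car S) :
  Qform S (forall s : S1 S, ap1 S (mul1 S (Some k) s) (Some m)).
Proof. exact (Qf2 S (TMul S (TConst S (Some k)) (TVar S 1)) (TConst S (Some m))
             (conj I (or_introl eq_refl)) I). Qed.

Theorem mainTheorem18 (S : SemigroupAp) (HCD : CD_S S) (e : car S)
  (He : smul S e e = e) :
  co_subsemigroup S (Hclass S e).
Proof.
  split.
  - intros a x Ha.
    destruct Ha as [[H|H]|[H|H]].
    + destruct (cd_l S HCD x e (ap1 S (Some x) (Some a)) (q1 _ _ _)) as [A|A].
      * intro s. destruct (ap1_cot S _ (mul1 S s (Some x)) _ (H s)) as [h|h].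
        -- left; now apply ap1_sym.
        -- right; exact (se_l S _ _ _ h).
      * left; left; left; intro s; now apply ap1_sym.
      * right; exact A.
    + destruct (cd_l S HCD e x (ap1 S (Some x) (Some a)) (q1 _ _ _)) as [A|A].
      * intro s. destruct (ap1_cot S _ (Some x) _ (H s)) as [h|h].
        -- right; now apply ap1_sym.
        -- left; now apply ap1_sym.
      * left; left; right; intro s; now apply ap1_sym.
      * right; exact A.
    + destruct (cd_r S HCD x e (ap1 S (Some x) (Some a)) (q1 _ _ _)) as [A|A].
      * intro s. destruct (ap1_cot S _ (mul1 S (Some x) s) _ (H s)) as [h|h].
        -- left; now apply ap1_sym.
        -- right; exact (se_r S _ _ _ h).
      * left; right; left; intro s; now apply ap1_sym.
      * right; exact A.
    + destruct (cd_r S HCD e x (ap1 S (Some x) (Some a)) (q1 _ _ _)) as [A|A].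
      * intro s. destruct (ap1_cot S _ (Some x) _ (H s)) as [h|h].
        -- right; now apply ap1_sym.
        -- left; now apply ap1_sym.
      * left; right; right; intro s; now apply ap1_sym.
      * right; exact A.
  - intros x y Hxy.
    set (E := Some e : S1 S). set (X := Some x : S1 S). set (Y := Some y : S1 S).
    assert (HEE : mul1 S E E = E) by (simpl; now rewrite He).
    destruct Hxy as [[H|H]|[H|H]].
    +
      assert (F1 : forall c a, ap1 S (mul1 S a X) E \/
                     ap1 S (mul1 S c (Some (smul S e y))) E).
      { intros c a. pose proof (H (mul1 S c a)) as h.
        destruct (ap1_cot S _ (mul1 S c (mul1 S E Y)) _ h) as [h1|h1].
        - right; now apply ap1_sym.
        - left. change (Some (smul S x y)) with (mul1 S X Y) in h1.
          rewrite <- mul1_assoc, (mul1_assoc S a) in h1.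
          apply se_l in h1. apply se_r in h1. now apply ap1_sym. }
      assert (F2 : forall c, (forall a, ap1 S (mul1 S a X) E) \/
                     ap1 S (mul1 S c (Some (smul S e y))) E).
      { intro c. apply (cd_l S HCD x e _ (q1 _ _ _)). intro a; apply F1. }
      destruct (cd_l S HCD (smul S e y) e _ (q2l S x e) (fun c => proj1 (or_comm _ _) (F2 c))) as [A|A].
      2:{ left; left; left; intro s; now apply ap1_sym. }
      assert (F3 : forall d c, ap1 S (mul1 S c Y) E \/ ap1 S (mul1 S E d) Y).
      { intros d c. pose proof (ap1_sym S _ _ (A c)) as h.
        change (Some (smul S e y)) with (mul1 S E Y) in h.
        destruct (ap1_cot S _ (mul1 S c (mul1 S E (mul1 S E d))) _ h) as [h1|h1].
        - rewrite (mul1_assoc S E E d), HEE in h1.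
          destruct (ap1_cot S _ (mul1 S c Y) _ h1) as [h2|h2].
          + left; now apply ap1_sym.
          + right; apply ap1_sym; exact (se_l S _ _ _ h2).
        - right. apply se_l in h1. apply se_l in h1. exact h1. }
      assert (F4 : forall d, (forall c, ap1 S (mul1 S c Y) E) \/ ap1 S (mul1 S E d) Y).
      { intro d. apply (cd_l S HCD y e _ (q1 _ _ _)). intro c; apply F3. }
      destruct (cd_r S HCD e y _ (q2l S y e) (fun c => proj1 (or_comm _ _) (F4 c))) as [B|B].
      * right; right; right; intro s; now apply ap1_sym.
      * right; left; left; intro s; now apply ap1_sym.
    +
      right; left; right. intro t. pose proof (H (mul1 S X t)) as h.
      change (Some (smul S x y)) with (mul1 S X Y) in h.
      rewrite <- mul1_assoc in h. exact (se_l S _ _ _ h).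
    +
      assert (F1 : forall c a, ap1 S (mul1 S Y a) E \/
                     ap1 S (mul1 S (Some (smul S x e)) c) E).
      { intros c a. pose proof (H (mul1 S a c)) as h.
        destruct (ap1_cot S _ (mul1 S (mul1 S X E) c) _ h) as [h1|h1].
        - right; now apply ap1_sym.
        - left. change (Some (smul S x y)) with (mul1 S X Y) in h1.
          rewrite (mul1_assoc S (mul1 S X Y)), <- (mul1_assoc S X Y a) in h1.
          apply se_r in h1. apply se_l in h1. now apply ap1_sym. }
      assert (F2 : forall c, (forall a, ap1 S (mul1 S Y a) E) \/
                     ap1 S (mul1 S (Some (smul S x e)) c) E).
      { intro c. apply (cd_r S HCD y e _ (q1 _ _ _)). intro a; apply F1. }
      destruct (cd_r S HCD (smul S x e) e _ (q2r S y e) (fun c => proj1 (or_comm _ _) (F2 c))) as [A|A].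
      2:{ right; right; left; intro s; now apply ap1_sym. }
      assert (F3 : forall d c, ap1 S (mul1 S X c) E \/ ap1 S (mul1 S d E) X).
      { intros d c. pose proof (ap1_sym S _ _ (A c)) as h.
        change (Some (smul S x e)) with (mul1 S X E) in h.
        destruct (ap1_cot S _ (mul1 S (mul1 S (mul1 S d E) E) c) _ h) as [h1|h1].
        - rewrite <- (mul1_assoc S d E E), HEE in h1.
          destruct (ap1_cot S _ (mul1 S X c) _ h1) as [h2|h2].
          + left; now apply ap1_sym.
          + right; apply ap1_sym; exact (se_r S _ _ _ h2).
        - right. apply se_r in h1. apply se_r in h1. exact h1. }
      assert (F4 : forall d, (forall c, ap1 S (mul1 S X c) E) \/ ap1 S (mul1 S d E) X).
      { intro d. apply (cd_r S HCD x e _ (q1 _ _ _)). intro c; apply F3. }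
      destruct (cd_l S HCD e x _ (q2r S x e) (fun c => proj1 (or_comm _ _) (F4 c))) as [B|B].
      * left; left; right; intro s; now apply ap1_sym.
      * left; right; left; intro s; now apply ap1_sym.
    +
      left; right; right. intro t. pose proof (H (mul1 S t Y)) as h.
      change (Some (smul S x y)) with (mul1 S X Y) in h.
      rewrite mul1_assoc in h. exact (se_r S _ _ _ h).
Qed.
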